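(* Let $\mathcal{A}$ be a lattice tree automaton and $E$ a set of (conditional) approximation equations. If $\mathcal{A}'$ is obtained from $\mathcal{A}$ by merging states equivalent with respect to $E$ (written $\mathcal{A}\leadsto^!_E\mathcal{A}'$), then $\mathcal{L}(\mathcal{A})\subseteq\mathcal{L}(\mathcal{A}')$.
   Context: Lattice tree automaton (LTA) $\mathcal{A}=\langle\mathcal{F},\mathcal{Q},\mathcal{Q}_f,\Delta\rangle$ over an atomic lattice $\Lambda$: alphabet $\mathcal{F}=\mathcal{F}_\circ\cup\mathcal{F}_\bullet^{\#}$ (passive symbols, and interpreted symbols = elements of $\Lambda$ plus abstract operations, evaluated by a function $eval$ into $\Lambda$), finite states $\mathcal{Q}$, final states $\mathcal{Q}_f$, normalized transitions $f(q_1,\dots,q_n)\to q$ including lambda transitions $\lambda\to q$ ($\lambda\in\Lambda\setminus\{\bot\}$). Runs: a subterm over interpreted symbols whose evaluation is $\sqsubseteq\lambda$ may be replaced by $q$ if $\lambda\to q\in\Delta$; $f(q_1,\dots,q_n)$ may be replaced by $q$ if $f(q_1,\dots,q_n)\to q\in\Delta$. $\mathcal{L}(\mathcal{A},q)$ is the set of ground terms $t$ over passive symbols, operations and atoms of $\Lambda$ such that some $t'$ with $t\sqsubseteq t'$ (componentwise order, comparing interpreted subterms by their evaluations) satisfies $t'\to^*_{\mathcal{A}}q$; $\mathcal{L}(\mathcal{A})=\bigcup_{q\in\mathcal{Q}_f}\mathcal{L}(\mathcal{A},q)$. $merge(\mathcal{A},q_1,q_2)$ is the automaton obtained by replacing every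 occurrence of state $q_2$ (in transitions and in the set of final states) by $q_1$. Approximation equations have the form $u=v\Leftarrow c_1\wedge\dots\wedge c_n$ with $u,v$ terms with variables over passive and interpreted symbols. Two distinct states $q,q'$ are equivalent w.r.t. $E$ if there is an equation and a substitution $\sigma$ from variables to states such that (after abstracting concrete constants) $u\sigma\to^*_{\mathcal{A}}q$, $v\sigma\to^*_{\mathcal{A}}q'$ and the constraints $c_1\wedge\dots\wedge c_n$ are satisfiable for $\sigma$. $\mathcal{A}\leadsto^!_E\mathcal{A}'$ means $\mathcal{A}'$ is obtained by merging states of $\mathcal{A}$ equivalent w.r.t. $E$ until no more merges apply. *)

(* Defs.v *)
From Stdlib Require Import List Relations.
Import ListNotations.
Set Implicit Arguments.

Record lattice := Lattice {
  lcar :> Type;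
  lle : lcar -> lcar -> Prop;
  lmeet : lcar -> lcar -> lcar;
  ljoin : lcar -> lcar -> lcar;
  lbot : lcar;
  lle_refl : forall x, lle x x;
  lle_trans : forall x y z, lle x y -> lle y z -> lle x z;
  lle_antisym : forall x y, lle x y -> lle y x -> x = y;
  lmeet_glb : forall x y z, lle z (lmeet x y) <-> (lle z x /\ lle z y);
  ljoin_lub : forall x y z, lle (ljoin x y) z <-> (lle x z /\ lle y z);
  lbot_least : forall x, lle lbot x
}.

Definition atom (La : lattice) (a : La) : Prop :=
  a <> lbot La /\ forall b : La, lle La b a -> b = lbot La \/ b = a.

Definition atomic (La : lattice) : Prop :=
  forall x : La, x <> lbot La -> exists a, atom La a /\ lle La a x.

Section LTA.
Variable La : lattice.
(* passive symbols, abstract operations, their arities and the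
   interpretation [eval] of operations into the lattice *)
Variables (P O : Type) (parity : P -> nat) (oarity : O -> nat).
Variable opeval : O -> list La -> La.
(* states and (equation) variables *)
Variables (Q X : Type).
Variable Qdec : forall q q' : Q, {q = q'} + {q <> q'}.

(* Terms: passive symbols, abstract operations, lattice elements,
   states (for run configurations), variables (for equations). *)
Inductive term : Type :=
  | TP : P -> list term -> term
  | TO : O -> list term -> term
  | TC : La -> term
  | TQ : Q -> term
  | TV : X -> term.

Fixpoint teval (t : term) : option La :=
  match t with
  | TC l => Some l
  | TO o ts =>
      let fix go (ts : list term) : option (list La) :=
        match ts with
        | [] => Some []
        | u :: r => match teval u, go r with
                    | Some a, Some l => Some (a :: l)
                    | _, _ => None
                    end
        end in
      match go ts with Some ls => Some (opeval o ls) | None => None end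
  | _ => None
  end.

Fixpoint wf (t : term) : Prop :=
  match t with
  | TP p ts => length ts = parity p /\ (fix go ts := match ts with
                 | [] => True | u :: r => wf u /\ go r end) ts
  | TO o ts => length ts = oarity o /\ (fix go ts := match ts with
                 | [] => True | u :: r => wf u /\ go r end) ts
  | _ => True
  end.

Fixpoint ground_atoms (t : term) : Prop :=
  match t with
  | TP _ ts | TO _ ts => (fix go ts := match ts with
                 | [] => True | u :: r => ground_atoms u /\ go r end) ts
  | TC l => atom La l
  | TQ _ => False
  | TV _ => False
  end.

Fixpoint subst (s : X -> Q) (t : term) : term :=
  match t with
  | TP p ts => TP p (map (subst s) ts)
  | TO o ts => TO o (map (subst s) ts)
  | TV x => TQ (s x)
  | u => u
  end.

Definition rn (q1 q2 q : Q) : Q := if Qdec q q2 then q1 else q.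

Inductive fsym : Type := SP : P -> fsym | SO : O -> fsym.

Definition fsym_arity (f : fsym) : nat :=
  match f with SP p => parity p | SO o => oarity o end.

Definition fapp (f : fsym) (ts : list term) : term :=
  match f with SP p => TP p ts | SO o => TO o ts end.

Inductive trans : Type :=
  | TrSym : fsym -> list Q -> Q -> trans
  | TrLam : La -> Q -> trans.

Record lta : Type := LTA { delta : list trans; finals : list Q }.

Definition wf_lta (A : lta) : Prop :=
  forall tr, In tr (delta A) ->
    match tr with
    | TrSym f qs _ => length qs = fsym_arity f
    | TrLam l _ => l <> lbot La
    end.

Inductive rstep (A : lta) : term -> term -> Prop :=
  | rs_lam : forall t v l q, teval t = Some v -> lle La v l ->
      In (TrLam l q) (delta A) -> rstep A t (TQ q)
  | rs_sym : forall f qs q, In (TrSym f qs q) (delta A) ->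
      rstep A (fapp f (map TQ qs)) (TQ q).

Inductive step (A : lta) : term -> term -> Prop :=
  | st_root : forall t t', rstep A t t' -> step A t t'
  | st_P : forall p l1 l2 t t', step A t t' ->
      step A (TP p (l1 ++ t :: l2)) (TP p (l1 ++ t' :: l2))
  | st_O : forall o l1 l2 t t', step A t t' ->
      step A (TO o (l1 ++ t :: l2)) (TO o (l1 ++ t' :: l2)).

Definition steps (A : lta) : term -> term -> Prop := clos_refl_trans _ (step A).

Inductive tle : term -> term -> Prop :=
  | tle_eval : forall t t' v v', teval t = Some v -> teval t' = Some v' ->
      lle La v v' -> tle t t'
  | tle_P : forall p ts ts', Forall2 tle ts ts' -> tle (TP p ts) (TP p ts').

Definition lang_q (A : lta) (q : Q) (t : term) : Prop :=
  wf t /\ ground_atoms t /\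
  exists t', wf t' /\ tle t t' /\ steps A t' (TQ q).

Definition lang (A : lta) (t : term) : Prop :=
  exists q, In q (finals A) /\ lang_q A q t.

Definition rn_trans (q1 q2 : Q) (tr : trans) : trans :=
  match tr with
  | TrSym f qs q => TrSym f (map (rn q1 q2) qs) (rn q1 q2 q)
  | TrLam l q => TrLam l (rn q1 q2 q)
  end.

Definition merge (A : lta) (q1 q2 : Q) : lta :=
  LTA (map (rn_trans q1 q2) (delta A)) (map (rn q1 q2) (finals A)).

(* Conditional approximation equations u = v <= c1 /\ ... /\ cn.
   The conjunction of constraints is given by its satisfiability
   predicate for a substitution sigma (from variables to states) in the
   current automaton. *)
Record equation : Type := Equation {
  eq_lhs : term;
  eq_rhs : term;
  eq_cond : lta -> (X -> Q) -> Prop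
}.

Definition equiv_states (E : list equation) (A : lta) (q q' : Q) : Prop :=
  q <> q' /\
  exists e sigma, In e E /\
    steps A (subst sigma (eq_lhs e)) (TQ q) /\
    steps A (subst sigma (eq_rhs e)) (TQ q') /\
    eq_cond e A sigma.

Inductive merge_step (E : list equation) : lta -> lta -> Prop :=
  | ms : forall A q q', equiv_states E A q q' -> merge_step E A (merge A q q').

Definition merge_norm (E : list equation) (A A' : lta) : Prop :=
  clos_refl_trans _ (merge_step E) A A' /\
  ~ (exists q q', equiv_states E A' q q').

End LTA.

(* Main.v *)
Require Import Defs.
From Stdlib Require Import List Relations.
Import ListNotations.

Section Helpers.
Variable La : lattice.
Variables (P O : Type) (parity : P -> nat) (oarity : O -> nat).
Variable opeval : O -> list La -> La.
Variables (Q X : Type).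
Variable Qdec : forall q q' : Q, {q = q'} + {q <> q'}.
Variables (q1 q2 : Q).

Notation T := (term La P O Q X).

Fixpoint rt (t : T) : T :=
  match t with
  | TP p ts => TP p (map rt ts)
  | TO o ts => TO o (map rt ts)
  | @TQ _ _ _ _ _ q => @TQ La P O Q X (rn Qdec q1 q2 q)
  | u => u
  end.

Definition term_ind' (Pr : T -> Prop)
  (hP : forall p ts, Forall Pr ts -> Pr (TP p ts))
  (hO : forall o ts, Forall Pr ts -> Pr (TO o ts))
  (hC : forall l, Pr (@TC La P O Q X l))
  (hQ : forall q, Pr (@TQ La P O Q X q))
  (hV : forall x, Pr (@TV La P O Q X x)) : forall t, Pr t :=
  fix F t := match t with
  | TP p ts => hP p ts ((fix G (ts : list T) : Forall Pr ts := match ts with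
        | [] => Forall_nil _ | u :: r => Forall_cons u (F u) (G r) end) ts)
  | TO o ts => hO o ts ((fix G (ts : list T) : Forall Pr ts := match ts with
        | [] => Forall_nil _ | u :: r => Forall_cons u (F u) (G r) end) ts)
  | @TC _ _ _ _ _ l => hC l
  | @TQ _ _ _ _ _ q => hQ q
  | @TV _ _ _ _ _ x => hV x
  end.

Fixpoint goE (ts : list T) : option (list La) :=
  match ts with
  | [] => Some []
  | u :: r => match teval opeval u, goE r with
              | Some a, Some l => Some (a :: l)
              | _, _ => None
              end
  end.

Lemma teval_TO : forall o ts, teval opeval (TO o ts) =
  match goE ts with Some ls => Some (opeval o ls) | None => None end.
Proof. reflexivity. Qed.

Lemma teval_rt : forall t, teval opeval (rt t) = teval opeval t.
Proof.
  apply term_ind'; intros; try reflexivity.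
  change (rt (TO o ts)) with (TO o (map rt ts)).
  rewrite !teval_TO.
  assert (goE (map rt ts) = goE ts) as ->; [|reflexivity].
  induction H as [|u r Hu Hr IH]; [reflexivity|].
  simpl. rewrite Hu, IH. reflexivity.
Qed.


Fixpoint tle_rt t t' (H : tle opeval t t') {struct H} : tle opeval t (rt t').
Proof.
  destruct H as [t t' v v' e1 e2 hl | p ts ts' HF].
  - eapply tle_eval; eauto. rewrite teval_rt; eauto.
  - simpl. constructor.
    revert ts ts' HF. fix G 3. intros ts ts' HF. destruct HF as [|x y l l' h hr].
    + constructor.
    + simpl. constructor. exact (tle_rt _ _ h). exact (G _ _ hr).
Qed.

Fixpoint wfl (ts : list T) : Prop :=
  match ts with [] => True | u :: r => wf parity oarity u /\ wfl r end.

Lemma wf_TP : forall p ts, wf parity oarity (TP p ts) = (length ts = parity p /\ wfl ts).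
Proof. reflexivity. Qed.
Lemma wf_TO : forall o ts, wf parity oarity (TO o ts) = (length ts = oarity o /\ wfl ts).
Proof. reflexivity. Qed.

Lemma wf_rt : forall t, wf parity oarity t -> wf parity oarity (rt t).
Proof.
  assert (Hl : forall ts, Forall (fun t => wf parity oarity t -> wf parity oarity (rt t)) ts ->
            wfl ts -> wfl (map rt ts)).
  { intros ts H; induction H; simpl; tauto. }
  apply (term_ind' (fun t => wf parity oarity t -> wf parity oarity (rt t))); intros; try exact I.
  - change (rt (TP p ts)) with (TP p (map rt ts)). rewrite wf_TP in H0 |- *.
    rewrite length_map. intuition.
  - change (rt (TO o ts)) with (TO o (map rt ts)). rewrite wf_TO in H0 |- *.
    rewrite length_map. intuition.
Qed.

Lemma step_rt : forall A t t', step opeval A t t' ->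
  step opeval (merge Qdec A q1 q2) (rt t) (rt t').
Proof.
  intros A t t' H. induction H.
  - apply st_root. destruct H.
    + eapply rs_lam. rewrite teval_rt; eassumption. eassumption.
      simpl. apply (in_map (rn_trans Qdec q1 q2)) in H1. exact H1.
    + apply (in_map (rn_trans Qdec q1 q2)) in H.
      replace (rt (fapp f (map (TQ La P O X) qs))) with
        (@fapp La P O Q X f (map (TQ La P O X) (map (rn Qdec q1 q2) qs))).
      * apply rs_sym. exact H.
      * destruct f; simpl; rewrite !map_map; reflexivity.
  - simpl. rewrite !map_app. simpl. apply st_P. exact IHstep.
  - simpl. rewrite !map_app. simpl. apply st_O. exact IHstep.
Qed.

Lemma steps_rt : forall A t t', steps opeval A t t' ->
  steps opeval (merge Qdec A q1 q2) (rt t) (rt t').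
Proof.
  intros A t t' H. induction H.
  - apply rt_step. apply step_rt; auto.
  - apply rt_refl.
  - eapply rt_trans; eauto.
Qed.

Lemma lang_merge : forall A (t : T), lang parity oarity opeval A t ->
  lang parity oarity opeval (merge Qdec A q1 q2) t.
Proof.
  intros A t [q [Hq [Hw [Hg [t' [Hw' [Hle Hs]]]]]]].
  exists (rn Qdec q1 q2 q). split.
  - simpl. apply in_map. exact Hq.
  - split; [exact Hw|]. split; [exact Hg|].
    exists (rt t'). split; [apply wf_rt; exact Hw'|]. split; [apply tle_rt; exact Hle|].
    apply (steps_rt _ _ _ Hs).
Qed.

End Helpers.

Theorem mainTheorem4
  (La : lattice) (HLa : atomic La)
  (P O : Type) (parity : P -> nat) (oarity : O -> nat)
  (opeval : O -> list La -> La)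
  (Q X : Type) (Qdec : forall q q' : Q, {q = q'} + {q <> q'})
  (E : list (equation La P O Q X))
  (A A' : lta La P O Q)
  (HA : wf_lta parity oarity A)
  (Hm : merge_norm opeval Qdec E A A') :
  forall t : term La P O Q X, lang parity oarity opeval A t -> lang parity oarity opeval A' t.
Proof.
  destruct Hm as [Hr _]. clear HA.
  induction Hr as [A1 A2 Hs| A1 | A1 A2 A3 _ IH1 _ IH2].
  - destruct Hs. intros t Ht. apply lang_merge; exact Ht.
  - auto.
  - auto.
Qed.
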